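(* Let $\bar F,\bar G\in C^1([a,b],\mathbb{R}_\mathcal{I})$. Then $$\bar F(b)\bar G(b)-\bar F(a)\bar G(a)=(IR)\int_a^b\bar F'(t)\bar G(t)\,dt+(IR)\int_a^b\bar F(t)\bar G'(t)\,dt.$$
   Context: An interval number is a closed interval $\bar a=[a_l,a_r]$ with $a_l<a_r$ real; $\mathbb{R}_\mathcal{I}$ is the set of interval numbers. Write $a_c=(a_l+a_r)/2$, $a_w=(a_r-a_l)/2>0$, $\bar a=\langle a_c;a_w\rangle=[a_c-a_w,a_c+a_w]$. Operations: $\bar a+\bar b=\langle a_c+b_c;a_wb_w\rangle$, $\bar a-\bar b=\langle a_c-b_c;a_w/b_w\rangle$, $k\bar a=\langle ka_c;a_w^k\rangle$ for real $k$, $\bar a\bar b=\langle a_cb_c;e^{\ln a_w\ln b_w}\rangle$; for real $h\ne0$, $\bar c/h=\langle c_c/h;c_w^{1/h}\rangle$. Distance $d(\bar a,\bar b)=\sqrt{(a_c-b_c)^2+(\ln a_w-\ln b_w)^2}$; continuity and limits w.r.t. $d$. Derivative: $\bar F'(x)=\lim_{h\to0}\frac{\bar F(x+h)-\bar F(x)}{h}$; $C^1([a,b],\mathbb{R}_\mathcal{I})$ is the set of interval-valued functions on $[a,b]$ that are differentiable on $[a,b]$ with continuous derivative. Products of interval-valued functions are pointwise. Interval Riemann integral: $\bar A=(IR)\int_a^b\bar f$ if for every $\varepsilon>0$ there is $\delta>0$ such that for every partition $a=t_0<\dots<t_n=b$ with mesh $<\delta$ and tags $\xi_i\in[t_{i-1},t_i]$,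 $d(\sum_i(t_i-t_{i-1})\bar f(\xi_i),\bar A)<\varepsilon$. *)

(* Defs.v *)
From Stdlib Require Import Reals Lra.
Open Scope R_scope.

(* An interval number <a_c ; a_w> = [a_c - a_w, a_c + a_w], with a_w > 0. *)
Record Inum : Type := mkI { ic : R; iw : R; iw_pos : 0 < iw }.

Definition iadd (a b : Inum) : Inum :=
  mkI (ic a + ic b) (iw a * iw b) (Rmult_lt_0_compat _ _ (iw_pos a) (iw_pos b)).

Definition isub (a b : Inum) : Inum :=
  mkI (ic a - ic b) (iw a / iw b) (Rdiv_lt_0_compat _ _ (iw_pos a) (iw_pos b)).

Definition iscal (k : R) (a : Inum) : Inum :=
  mkI (k * ic a) (Rpower (iw a) k) (exp_pos _).

Definition imul (a b : Inum) : Inum :=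
  mkI (ic a * ic b) (exp (ln (iw a) * ln (iw b))) (exp_pos _).

Definition idivr (c : Inum) (h : R) : Inum :=
  mkI (ic c / h) (Rpower (iw c) (1 / h)) (exp_pos _).

Definition izero : Inum := mkI 0 1 Rlt_0_1.

Definition idist (a b : Inum) : R :=
  sqrt ((ic a - ic b) ^ 2 + (ln (iw a) - ln (iw b)) ^ 2).

Definition is_ideriv_on (a b : R) (F : R -> Inum) (x : R) (D : Inum) : Prop :=
  forall eps, 0 < eps -> exists delta, 0 < delta /\
    forall h, h <> 0 -> Rabs h < delta -> a <= x + h <= b ->
      idist (idivr (isub (F (x + h)) (F x)) h) D < eps.

Definition icont_on (a b : R) (f : R -> Inum) : Prop :=
  forall x, a <= x <= b -> forall eps, 0 < eps -> exists delta, 0 < delta /\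
    forall y, a <= y <= b -> Rabs (y - x) < delta -> idist (f y) (f x) < eps.

Definition iC1 (a b : R) (F F' : R -> Inum) : Prop :=
  (forall x, a <= x <= b -> is_ideriv_on a b F x (F' x)) /\ icont_on a b F'.

Fixpoint rsum (f : R -> Inum) (t xi : nat -> R) (n : nat) : Inum :=
  match n with
  | O => izero
  | S m => iadd (rsum f t xi m) (iscal (t (S m) - t m) (f (xi (S m))))
  end.

Definition is_IRint (f : R -> Inum) (a b : R) (A : Inum) : Prop :=
  forall eps, 0 < eps -> exists delta, 0 < delta /\
    forall (n : nat) (t xi : nat -> R),
      t O = a -> t n = b ->
      (forall i, (i < n)%nat -> t i < t (S i) /\ t (S i) - t i < delta) ->
      (forall i, (1 <= i <= n)%nat -> t (pred i) <= xi i <= t i) ->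
      idist (rsum f t xi n) A < eps.

(* Main.v *)
Require Import Defs.
From Stdlib Require Import Reals Lra ProofIrrelevance Lia.
From Coquelicot Require Import Coquelicot.
Open Scope R_scope.

Definition clamp (a b x : R) := Rmax a (Rmin b x).

Lemma clamp_id a b x : a <= x <= b -> clamp a b x = x.
Proof. intros H; unfold clamp, Rmax, Rmin; repeat destruct Rle_dec; lra. Qed.

Lemma clamp_in a b x : a <= b -> a <= clamp a b x <= b.
Proof. intros H; unfold clamp, Rmax, Rmin; repeat destruct Rle_dec; lra. Qed.

Lemma clamp_lip a b x y : a <= b -> Rabs (clamp a b y - clamp a b x) <= Rabs (y - x).
Proof.
  intros H; unfold clamp, Rmax, Rmin; repeat destruct Rle_dec;
  unfold Rabs; repeat destruct Rcase_abs; lra.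
Qed.

Definition sder a b (f : R -> R) x d := forall eps, 0 < eps -> exists delta, 0 < delta /\
  forall h, h <> 0 -> Rabs h < delta -> a <= x + h <= b -> Rabs ((f (x + h) - f x) / h - d) < eps.

Definition scont a b (f : R -> R) := forall x, a <= x <= b -> forall eps, 0 < eps ->
  exists delta, 0 < delta /\ forall y, a <= y <= b -> Rabs (y - x) < delta -> Rabs (f y - f x) < eps.

Lemma lemC a b f x : a <= b -> scont a b f -> continuity_pt (fun y => f (clamp a b y)) x.
Proof.
  intros Hab Hf eps Heps.
  destruct (Hf (clamp a b x) (clamp_in a b x Hab) eps Heps) as [d [Hd Hy]].
  exists d; split; [lra|]. intros y [_ Hyx]. simpl in *. unfold R_dist in *.
  apply Hy. apply clamp_in; auto.
  eapply Rle_lt_trans; [apply clamp_lip; auto| exact Hyx].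
Qed.

Lemma lemL2 a b f f' : (forall x, a <= x <= b -> sder a b f x (f' x)) -> scont a b f.
Proof.
  intros H x Hx eps Heps.
  destruct (H x Hx 1 Rlt_0_1) as [d [Hd Hh]].
  assert (Hp : 0 < Rabs (f' x) + 1) by (pose proof (Rabs_pos (f' x)); lra).
  exists (Rmin d (eps / (Rabs (f' x) + 1))). split.
  { apply Rmin_pos; auto. apply Rdiv_lt_0_compat; auto. }
  intros y Hy Hyx.
  destruct (Req_dec y x) as [->|Hne].
  { replace (f x - f x) with 0 by ring; rewrite Rabs_R0; auto. }
  pose proof (Rmin_l d (eps / (Rabs (f' x) + 1))).
  pose proof (Rmin_r d (eps / (Rabs (f' x) + 1))).
  assert (Hh0 : y - x <> 0) by lra.
  specialize (Hh (y - x) Hh0 ltac:(lra) ltac:(replace (x + (y - x)) with y by ring; lra)).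
  replace (x + (y - x)) with y in Hh by ring.
  set (q := (f y - f x) / (y - x)) in Hh.
  replace (f y - f x) with ((y - x) * q) by (unfold q; field; auto).
  rewrite Rabs_mult.
  assert (Hq : Rabs q <= Rabs (f' x) + 1).
  { pose proof (Rabs_triang (q - f' x) (f' x)). replace (q - f' x + f' x) with q in H2 by ring. lra. }
  assert (Rabs (y - x) * Rabs q <= Rabs (y - x) * (Rabs (f' x) + 1)).
  { apply Rmult_le_compat_l; auto. apply Rabs_pos. }
  assert (Rabs (y - x) * (Rabs (f' x) + 1) < eps / (Rabs (f' x) + 1) * (Rabs (f' x) + 1)).
  { apply Rmult_lt_compat_r; lra. }
  replace (eps / (Rabs (f' x) + 1) * (Rabs (f' x) + 1)) with eps in H3 by (field; lra).
  lra.
Qed.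

Lemma lemL3 a b f x d : a < x < b -> sder a b f x d -> derivable_pt_lim f x d.
Proof.
  intros Hx H eps Heps.
  destruct (H eps Heps) as [del [Hd Hh]].
  assert (Hp : 0 < Rmin del (Rmin (x - a) (b - x))).
  { apply Rmin_pos; auto. apply Rmin_pos; lra. }
  exists (mkposreal _ Hp). intros h Hh0 Hha. simpl in Hha.
  pose proof (Rmin_l del (Rmin (x - a) (b - x))).
  pose proof (Rmin_r del (Rmin (x - a) (b - x))).
  pose proof (Rmin_l (x - a) (b - x)).
  pose proof (Rmin_r (x - a) (b - x)).
  apply Hh; auto. lra. apply Rabs_def2 in Hha. lra.
Qed.
Fixpoint rs (g : R -> R) (t xi : nat -> R) (n : nat) : R :=
  match n with
  | O => 0
  | S m => rs g t xi m + (t (S m) - t m) * g (xi (S m))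
  end.

Definition sint (v : R -> R) a b I := forall eps, 0 < eps -> exists delta, 0 < delta /\
    forall (n : nat) (t xi : nat -> R),
      t O = a -> t n = b ->
      (forall i, (i < n)%nat -> t i < t (S i) /\ t (S i) - t i < delta) ->
      (forall i, (1 <= i <= n)%nat -> t (pred i) <= xi i <= t i) ->
      Rabs (rs v t xi n - I) < eps.

Lemma mono (t : nat -> R) n : (forall i, (i < n)%nat -> t i < t (S i)) ->
  forall k, (k <= n)%nat -> t O <= t k <= t n.
Proof.
  intros H k Hk. split.
  - induction k. lra. assert (t k < t (S k)) by (apply H; lia). specialize (IHk ltac:(lia)). lra.
  - assert (G : forall j k, (k + j = n)%nat -> t k <= t n).
    { induction j; intros k' Hk'. replace k' with n by lia. lra.
      assert (t k' < t (S k')) by (apply H; lia). specialize (IHj (S k') ltac:(lia)). lra. }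
    apply (G (n - k)%nat). lia.
Qed.

Lemma lemA a b U w : a < b ->
  (forall x, a < x < b -> is_derive U x (w x)) ->
  (forall x, continuity_pt (fun y => U (clamp a b y)) x) ->
  (forall x, a <= x <= b -> continuity_pt (fun y => w (clamp a b y)) x) ->
  sint w a b (U b - U a).
Proof.
  intros Hab HD HU Hw eps Heps.
  assert (He : 0 < eps / (2 * (b - a))) by (apply Rdiv_lt_0_compat; lra).
  set (e' := eps / (2 * (b - a))) in *.
  destruct (Heine _ _ (compact_P3 a b) Hw (mkposreal e' He)) as [del Hdel].
  exists del. split; [apply cond_pos|].
  intros n t xi H0 Hn Hm Ht.
  assert (Hmo := mono t n (fun i Hi => proj1 (Hm i Hi))).
  rewrite H0, Hn in Hmo.
  assert (key : forall k, (k <= n)%nat -> Rabs (rs w t xi k - (U (t k) - U (t O))) <= e' * (t k - t O)).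
  { induction k; intros Hk.
    - simpl. replace (0 - (U (t O) - U (t O))) with 0 by ring. rewrite Rabs_R0. lra.
    - specialize (IHk ltac:(lia)).
      destruct (Hm k ltac:(lia)) as [Hlt Hmesh].
      destruct (Hmo k ltac:(lia)) as [Hk1 Hk2].
      destruct (Hmo (S k) Hk) as [Hk3 Hk4].
      assert (HM := MVT_gen (fun y => U (clamp a b y)) (t k) (t (S k)) w).
      cbv zeta in HM. rewrite Rmin_left in HM by lra. rewrite Rmax_right in HM by lra.
      destruct HM as [c [Hc Heq]].
      + intros x Hx. apply is_derive_ext_loc with U; [|apply HD; lra].
        apply (locally_interval _ x a b); simpl; try lra.
        intros y Hy1 Hy2. rewrite clamp_id; auto; lra.
      + intros x Hx. apply HU.
      + rewrite !clamp_id in Heq by lra.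
        destruct (Ht (S k) ltac:(lia)) as [Hx1 Hx2]. simpl in Hx1.
        assert (HB : Rabs (w (xi (S k)) - w c) < e').
        { assert (Hd := Hdel (xi (S k)) c ltac:(lra) ltac:(lra)).
          rewrite !clamp_id in Hd by lra. apply Hd.
          apply Rabs_def1; lra. }
        simpl rs.
        replace (rs w t xi k + (t (S k) - t k) * w (xi (S k)) - (U (t (S k)) - U (t O)))
          with ((rs w t xi k - (U (t k) - U (t O))) + (t (S k) - t k) * (w (xi (S k)) - w c))
          by (assert (E : U (t (S k)) = U (t k) + w c * (t (S k) - t k)) by lra; rewrite E; ring).
        eapply Rle_trans; [apply Rabs_triang|].
        rewrite Rabs_mult, (Rabs_pos_eq (t (S k) - t k)) by lra.
        assert ((t (S k) - t k) * Rabs (w (xi (S k)) - w c) <= (t (S k) - t k) * e').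
        { apply Rmult_le_compat_l; lra. }
        nra. }
  specialize (key n (le_n n)). rewrite Hn, H0 in key.
  replace (e' * (b - a)) with (eps / 2) in key by (unfold e'; field; lra).
  lra.
Qed.
Lemma lemB a b v : a < b ->
  (forall x, continuity_pt (fun y => v (clamp a b y)) x) -> exists I, sint v a b I.
Proof.
  intros Hab Hv.
  set (vh := fun y => v (clamp a b y)) in *.
  assert (Hc : forall x, continuous vh x) by (intros; apply continuity_pt_filterlim; apply Hv).
  set (U := fun x => RInt vh a x).
  assert (HD : forall x, is_derive U x (vh x)).
  { intros x. apply (is_derive_RInt vh U a); [|apply Hc].
    apply filter_forall. intros y. apply (RInt_correct vh a y). apply ex_RInt_continuous.
    intros; apply Hc. }
  exists (U b - U a). apply lemA; auto.
  - intros x Hx. replace (v x) with (vh x) by (unfold vh; rewrite clamp_id; auto; lra). apply HD.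
  - intros x. change (continuity_pt (comp U (clamp a b)) x).
    apply continuity_pt_comp.
    + change (continuity_pt (fun y => id (clamp a b y)) x). apply (lemC a b id); [lra|].
      intros z Hz eps Heps. exists eps; split; auto.
    + apply continuity_pt_filterlim. apply (ex_derive_continuous (V := R_NormedModule) U). eexists; apply HD.
Qed.

Lemma rs_add f g t xi n : rs (fun x => f x + g x) t xi n = rs f t xi n + rs g t xi n.
Proof. induction n; simpl; [ring|]. rewrite IHn; ring. Qed.

Lemma rs_ext f g t xi n : (forall x, f x = g x) -> rs f t xi n = rs g t xi n.
Proof. intros H; induction n; simpl; auto. rewrite IHn, H; auto. Qed.

Lemma sint_ext f g a b I : sint f a b I -> (forall x, f x = g x) -> sint g a b I.
Proof.
  intros H E eps Heps. destruct (H eps Heps) as [d [Hd Hs]]. exists d; split; auto.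
  intros. rewrite <- (rs_ext f g); auto.
Qed.

Lemma sint_sub f g a b I J : sint (fun x => f x + g x) a b I -> sint f a b J -> sint g a b (I - J).
Proof.
  intros H1 H2 eps Heps.
  destruct (H1 (eps/2) ltac:(lra)) as [d1 [Hd1 Hs1]].
  destruct (H2 (eps/2) ltac:(lra)) as [d2 [Hd2 Hs2]].
  exists (Rmin d1 d2). split; [apply Rmin_pos; auto|].
  intros n t xi H0 Hn Hm Ht.
  pose proof (Rmin_l d1 d2). pose proof (Rmin_r d1 d2).
  specialize (Hs1 n t xi H0 Hn ltac:(intros i Hi; destruct (Hm i Hi); split; lra) Ht).
  specialize (Hs2 n t xi H0 Hn ltac:(intros i Hi; destruct (Hm i Hi); split; lra) Ht).
  rewrite rs_add in Hs1.
  replace (rs g t xi n - (I - J)) with ((rs f t xi n + rs g t xi n - I) - (rs f t xi n - J)) by ring.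
  eapply Rle_lt_trans; [apply Rabs_triang|]. rewrite Rabs_Ropp. lra.
Qed.

Lemma comp1 x y : Rabs x <= sqrt (x ^ 2 + y ^ 2).
Proof.
  rewrite <- (sqrt_pow2 (Rabs x)) by apply Rabs_pos.
  apply sqrt_le_1_alt. rewrite pow2_abs. nra.
Qed.

Lemma comp2 x y : Rabs y <= sqrt (x ^ 2 + y ^ 2).
Proof. rewrite Rplus_comm. apply comp1. Qed.

Lemma small x y e : Rabs x < e / 2 -> Rabs y < e / 2 -> sqrt (x ^ 2 + y ^ 2) < e.
Proof.
  intros H1 H2.
  assert (0 <= Rabs x) by apply Rabs_pos. assert (0 <= Rabs y) by apply Rabs_pos.
  rewrite <- (sqrt_pow2 e) by lra.
  apply sqrt_lt_1_alt. split; [nra|].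
  rewrite <- (pow2_abs x), <- (pow2_abs y). nra.
Qed.

Lemma ln_Rpower z k : ln (Rpower z k) = k * ln z.
Proof. unfold Rpower; apply ln_exp. Qed.

Lemma rsum_c f t xi n : ic (rsum f t xi n) = rs (fun x => ic (f x)) t xi n.
Proof. induction n; simpl; auto. rewrite IHn; auto. Qed.

Lemma rsum_l f t xi n : ln (iw (rsum f t xi n)) = rs (fun x => ln (iw (f x))) t xi n.
Proof.
  induction n; simpl. apply ln_1.
  rewrite ln_mult; [|apply iw_pos|apply exp_pos]. rewrite IHn, ln_Rpower; auto.
Qed.

Lemma lift f a b Ic Il : sint (fun x => ic (f x)) a b Ic -> sint (fun x => ln (iw (f x))) a b Il ->
  is_IRint f a b (mkI Ic (exp Il) (exp_pos Il)).
Proof.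
  intros H1 H2 eps Heps.
  destruct (H1 (eps/2) ltac:(lra)) as [d1 [Hd1 Hs1]].
  destruct (H2 (eps/2) ltac:(lra)) as [d2 [Hd2 Hs2]].
  exists (Rmin d1 d2). split; [apply Rmin_pos; auto|].
  intros n t xi H0 Hn Hm Ht.
  pose proof (Rmin_l d1 d2). pose proof (Rmin_r d1 d2).
  specialize (Hs1 n t xi H0 Hn ltac:(intros i Hi; destruct (Hm i Hi); split; lra) Ht).
  specialize (Hs2 n t xi H0 Hn ltac:(intros i Hi; destruct (Hm i Hi); split; lra) Ht).
  unfold idist; simpl. rewrite rsum_c, rsum_l, ln_exp. apply small; auto.
Qed.

Lemma Inum_eq x y : ic x = ic y -> iw x = iw y -> x = y.
Proof.
  destruct x, y; simpl; intros; subst. f_equal. apply proof_irrelevance.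
Qed.

Lemma comp_der a b F x D : is_ideriv_on a b F x D ->
  sder a b (fun y => ic (F y)) x (ic D) /\ sder a b (fun y => ln (iw (F y))) x (ln (iw D)).
Proof.
  intros H. split; intros eps Heps; destruct (H eps Heps) as [d [Hd Hh]]; exists d; split; auto;
  intros h Hh0 Hha Hin; specialize (Hh h Hh0 Hha Hin); eapply Rle_lt_trans; try exact Hh;
  unfold idist; simpl.
  - apply comp1.
  - rewrite ln_Rpower, ln_div by apply iw_pos.
    replace (1 / h * (ln (iw (F (x + h))) - ln (iw (F x))))
      with ((ln (iw (F (x + h))) - ln (iw (F x))) / h) by (field; auto).
    apply comp2.
Qed.

Lemma comp_cont a b F : icont_on a b F ->
  scont a b (fun y => ic (F y)) /\ scont a b (fun y => ln (iw (F y))).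
Proof.
  intros H. split; intros x Hx eps Heps; destruct (H x Hx eps Heps) as [d [Hd Hh]]; exists d;
  split; auto; intros y Hy Hyx; specialize (Hh y Hy Hyx); eapply Rle_lt_trans; try exact Hh;
  unfold idist; simpl; [apply comp1|apply comp2].
Qed.
Lemma part a b (f f' g g' : R -> R) : a < b ->
  (forall x, a <= x <= b -> sder a b f x (f' x)) ->
  (forall x, a <= x <= b -> sder a b g x (g' x)) ->
  scont a b f' -> scont a b g' ->
  exists I1, sint (fun x => f' x * g x) a b I1 /\
    sint (fun x => f x * g' x) a b (f b * g b - f a * g a - I1).
Proof.
  intros Hab Hf Hg Hf' Hg'.
  assert (Cf := lemL2 a b f f' Hf). assert (Cg := lemL2 a b g g' Hg).
  assert (Hab' : a <= b) by lra.
  destruct (lemB a b (fun x => f' x * g x) Hab) as [I1 HI1].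
  { intros x. apply (continuity_pt_mult (fun y => f' (clamp a b y)) (fun y => g (clamp a b y)));
    apply lemC; auto. }
  exists I1. split; auto.
  apply (sint_sub (fun x => f' x * g x)); auto.
  apply (lemA a b (fun x => f x * g x)); auto.
  - intros x Hx. apply is_derive_Reals.
    apply (derivable_pt_lim_mult f g x). apply (lemL3 a b); auto; apply Hf; lra.
    apply (lemL3 a b); auto; apply Hg; lra.
  - intros x. apply (continuity_pt_mult (fun y => f (clamp a b y)) (fun y => g (clamp a b y)));
    apply lemC; auto.
  - intros x Hx.
    apply (continuity_pt_plus (fun y => f' (clamp a b y) * g (clamp a b y))
                              (fun y => f (clamp a b y) * g' (clamp a b y))).
    apply (continuity_pt_mult (fun y => f' (clamp a b y)) (fun y => g (clamp a b y)));
    apply lemC; auto.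
    apply (continuity_pt_mult (fun y => f (clamp a b y)) (fun y => g' (clamp a b y)));
    apply lemC; auto.
Qed.

Theorem theorem5p11 (a b : R) (F F' G G' : R -> Inum) :
  a < b -> iC1 a b F F' -> iC1 a b G G' ->
  exists A1 A2 : Inum,
    is_IRint (fun t => imul (F' t) (G t)) a b A1 /\
    is_IRint (fun t => imul (F t) (G' t)) a b A2 /\
    isub (imul (F b) (G b)) (imul (F a) (G a)) = iadd A1 A2.
Proof.
  intros Hab [HdF HcF] [HdG HcG].
  destruct (comp_cont a b F' HcF) as [CF1 CF2].
  destruct (comp_cont a b G' HcG) as [CG1 CG2].
  destruct (part a b (fun y => ic (F y)) (fun y => ic (F' y)) (fun y => ic (G y)) (fun y => ic (G' y)))
    as [Ic [H1c H2c]]; auto.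
  { intros x Hx; apply (comp_der a b F x (F' x)); auto. }
  { intros x Hx; apply (comp_der a b G x (G' x)); auto. }
  destruct (part a b (fun y => ln (iw (F y))) (fun y => ln (iw (F' y)))
                     (fun y => ln (iw (G y))) (fun y => ln (iw (G' y))))
    as [Il [H1l H2l]]; auto.
  { intros x Hx; apply (comp_der a b F x (F' x)); auto. }
  { intros x Hx; apply (comp_der a b G x (G' x)); auto. }
  eexists (mkI Ic (exp Il) (exp_pos Il)), (mkI _ (exp _) (exp_pos _)).
  split; [|split].
  - apply lift; auto. eapply sint_ext; [exact H1l|]. intros x; simpl. rewrite ln_exp; auto.
  - apply lift; [exact H2c|]. eapply sint_ext; [exact H2l|]. intros x; simpl. rewrite ln_exp; auto.
  - apply Inum_eq; simpl. ring.
    rewrite <- exp_plus.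
    match goal with |- _ = exp ?e => replace e with
      (ln (iw (F b)) * ln (iw (G b)) + - (ln (iw (F a)) * ln (iw (G a)))) by ring end.
    rewrite exp_plus, exp_Ropp. reflexivity.
Qed.
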